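(* Let $\Gamma$ be a graph. Then $\Gamma$ is strongly shortcut as a graph if and only if $\Gamma$ does not approximate $n$-gons.
   Context: Graphs are geodesic metric spaces with each edge isometric to the unit interval. The cycle graph $S_n$ is the graph isometric to a Riemannian circle of length $n$; a cycle in $\Gamma$ is a combinatorial map $\alpha\colon S_n\to\Gamma$; for $K>1$ it is $\frac1K$-almost isometric if $d(\alpha(p),\alpha(\bar p))\ge\frac1K\cdot\frac n2$ for all antipodal $p,\bar p\in S_n$. $\Gamma$ is strongly shortcut as a graph if for some $K>1$ there is a bound on the lengths of its $\frac1K$-almost isometric cycles. $S_n^0$ is the vertex set of $S_n$ with the induced metric and $\lambda S_n^0$ is it with the metric scaled by $\lambda>0$. A metric space $X$ approximates $n$-gons if for every $K>1$ and every $n\in\mathbb N$ there exist $K$-bilipschitz embeddings $\lambda S_n^0\to X$ for arbitrarily large $\lambda>0$. *)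

(* Defs.v *)
From Stdlib Require Import Reals Lra ClassicalEpsilon.
Open Scope R_scope.

Record graph := {
  gV : Type;
  gE : Type;
  gsrc : gE -> gV;
  gtgt : gE -> gV }.

Inductive walk (G : graph) : gV G -> gV G -> nat -> Prop :=
| walk0 v : walk G v v 0
| walk_fw e v n : walk G (gtgt G e) v n -> walk G (gsrc G e) v (S n)
| walk_bw e v n : walk G (gsrc G e) v n -> walk G (gtgt G e) v (S n).

Definition connected_graph (G : graph) : Prop :=
  forall u v : gV G, exists n, walk G u v n.

Definition is_vdist (G : graph) (u v : gV G) (n : nat) : Prop :=
  walk G u v n /\ forall m, walk G u v m -> (n <= m)%nat.

(* combinatorial distance between vertices (meaningful for connected G) *)
Definition vdist (G : graph) (u v : gV G) : R :=
  INR (epsilon (inhabits 0%nat) (is_vdist G u v)).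

(* points of the geometric realization: a vertex, or the point of edge e at
   distance t from (gsrc e), 0 <= t <= 1 *)
Inductive gpoint (G : graph) : Type :=
| Vtx (v : gV G)
| Ept (e : gE G) (t : R).
Arguments Vtx {G} v.
Arguments Ept {G} e t.

Definition valid_point {G : graph} (p : gpoint G) : Prop :=
  match p with Vtx _ => True | Ept _ t => 0 <= t <= 1 end.

(* length of the shortest route leaving through endpoints *)
Definition via_ends {G : graph} (x y : gpoint G) : R :=
  let d := vdist G in
  let s_ := gsrc G in let t_ := gtgt G in
  match x, y with
  | Vtx u, Vtx v => d u v
  | Vtx u, Ept e t => Rmin (d u (s_ e) + t) (d u (t_ e) + (1 - t))
  | Ept e s, Vtx v => Rmin (s + d (s_ e) v) ((1 - s) + d (t_ e) v)
  | Ept e s, Ept e' t =>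
      Rmin (Rmin (s + d (s_ e) (s_ e') + t) (s + d (s_ e) (t_ e') + (1 - t)))
           (Rmin ((1 - s) + d (t_ e) (s_ e') + t)
                 ((1 - s) + d (t_ e) (t_ e') + (1 - t)))
  end.

(* the path metric of the geometric realization (edges of length 1) *)
Definition gdist {G : graph} (x y : gpoint G) : R :=
  match x, y with
  | Ept e s, Ept e' t =>
      if excluded_middle_informative (e = e')
      then Rmin (Rabs (s - t)) (via_ends x y) else via_ends x y
  | _, _ => via_ends x y
  end.

(* A combinatorial map alpha : S_n -> G (n >= 1): vertex i of S_n goes to f i,
   the edge [i, i+1 mod n] goes onto edge (fst (h i)), traversed from gsrc to
   gtgt if snd (h i) = true, and backwards otherwise. *)
Definition is_comb_cycle (G : graph) (n : nat) (f : nat -> gV G)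
  (h : nat -> gE G * bool) : Prop :=
  (0 < n)%nat /\
  forall i, (i < n)%nat ->
    let j := Nat.modulo (i + 1) n in
    match h i with
    | (e, true) => gsrc G e = f i /\ gtgt G e = f j
    | (e, false) => gtgt G e = f i /\ gsrc G e = f j
    end.

(* image under alpha of the point x of S_n = R / nZ *)
Definition cycle_pt (G : graph) (n : nat) (h : nat -> gE G * bool) (x : R)
  : gpoint G :=
  let i := Z.to_nat (Z.modulo (Int_part x) (Z.of_nat n)) in
  let s := x - IZR (Int_part x) in
  match h i with
  | (e, true) => Ept e s
  | (e, false) => Ept e (1 - s)
  end.

Definition almost_isometric_cycle (G : graph) (K : R) (n : nat)
  (h : nat -> gE G * bool) : Prop :=
  forall x : R,
    gdist (cycle_pt G n h x) (cycle_pt G n h (x + INR n / 2)) >= (1 / K) * (INR n / 2).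

Definition strongly_shortcut_graph (G : graph) : Prop :=
  exists K : R, 1 < K /\ exists N : nat,
    forall (n : nat) (f : nat -> gV G) (h : nat -> gE G * bool),
      is_comb_cycle G n f h -> almost_isometric_cycle G K n h -> (n <= N)%nat.

Definition cyc_dist (n i j : nat) : R :=
  let d := INR (Nat.max i j - Nat.min i j) in Rmin d (INR n - d).

Definition bilip_ngon (G : graph) (K lam : R) (n : nat) (g : nat -> gpoint G)
  : Prop :=
  (forall i, (i < n)%nat -> valid_point (g i)) /\
  forall i j, (i < n)%nat -> (j < n)%nat ->
    (1 / K) * (lam * cyc_dist n i j) <= gdist (g i) (g j) /\
    gdist (g i) (g j) <= K * (lam * cyc_dist n i j).

Definition approximates_ngons (G : graph) : Prop :=
  forall K : R, 1 < K -> forall n : nat, forall L : R,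
    exists lam : R, 0 < lam /\ L < lam /\
      exists g : nat -> gpoint G, bilip_ngon G K lam n g.

(* Main.v *)
Require Import Defs.
From Stdlib Require Import Reals.
From Stdlib Require Import Lra Lia ClassicalEpsilon Classical List ZArith.
Open Scope R_scope.


Lemma walk_app (G : graph) u v w n k :
  walk G u v n -> walk G v w k -> walk G u w (n + k).
Proof.
  intros H; revert w k; induction H; intros w k Hk; simpl.
  - exact Hk.
  - apply walk_fw. apply IHwalk. exact Hk.
  - apply walk_bw. apply IHwalk. exact Hk.
Qed.

Lemma walk_rev (G : graph) u v n : walk G u v n -> walk G v u n.
Proof.
  induction 1.
  - constructor.
  - replace (S n) with (n + 1)%nat by lia. eapply walk_app; [exact IHwalk|].
    apply walk_bw. constructor.
  - replace (S n) with (n + 1)%nat by lia. eapply walk_app; [exact IHwalk|].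
    apply walk_fw. constructor.
Qed.

Definition vn (G : graph) (u v : gV G) : nat :=
  epsilon (inhabits 0%nat) (is_vdist G u v).

Lemma is_vdist_ex (G : graph) u v n : walk G u v n -> exists m, is_vdist G u v m.
Proof.
  revert u v. induction n as [n IH] using (well_founded_induction Wf_nat.lt_wf).
  intros u v Hw.
  destruct (classic (exists m, walk G u v m /\ (m < n)%nat)) as [[m [Hm Hlt]]|Hno].
  - exact (IH m Hlt u v Hm).
  - exists n. split; [exact Hw|]. intros m Hm.
    destruct (Nat.le_gt_cases n m); [assumption|]. exfalso; apply Hno; eauto.
Qed.

Lemma vn_spec (G : graph) (Hc : connected_graph G) u v : is_vdist G u v (vn G u v).
Proof.
  unfold vn. apply epsilon_spec. destruct (Hc u v) as [n Hn].
  exact (is_vdist_ex G u v n Hn).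
Qed.

Lemma vdist_vn (G : graph) u v : vdist G u v = INR (vn G u v).
Proof. reflexivity. Qed.

Lemma vdist_le_walk (G : graph) (Hc : connected_graph G) u v n :
  walk G u v n -> vdist G u v <= INR n.
Proof.
  intros H. rewrite vdist_vn. apply le_INR. apply (proj2 (vn_spec G Hc u v)). exact H.
Qed.

Lemma vdist_walk (G : graph) (Hc : connected_graph G) u v :
  walk G u v (vn G u v).
Proof. apply (proj1 (vn_spec G Hc u v)). Qed.

Lemma vdist_nonneg (G : graph) u v : 0 <= vdist G u v.
Proof. apply pos_INR. Qed.

Lemma vdist_refl (G : graph) (Hc : connected_graph G) u : vdist G u u = 0.
Proof.
  apply Rle_antisym; [|apply vdist_nonneg].
  change 0 with (INR 0). apply vdist_le_walk; [exact Hc|constructor].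
Qed.

Lemma vdist_tri (G : graph) (Hc : connected_graph G) u v w :
  vdist G u w <= vdist G u v + vdist G v w.
Proof.
  rewrite !vdist_vn, <- plus_INR. rewrite <- vdist_vn.
  apply vdist_le_walk; [exact Hc|]. eapply walk_app; apply vdist_walk; exact Hc.
Qed.

Lemma vdist_sym (G : graph) (Hc : connected_graph G) u v :
  vdist G u v = vdist G v u.
Proof.
  apply Rle_antisym; rewrite vdist_vn at 1; apply vdist_le_walk; try exact Hc;
  apply walk_rev; apply vdist_walk; exact Hc.
Qed.

Lemma vdist_edge (G : graph) (Hc : connected_graph G) e :
  vdist G (gsrc G e) (gtgt G e) <= 1 /\ vdist G (gtgt G e) (gsrc G e) <= 1.
Proof.
  split; change 1 with (INR 1); apply vdist_le_walk; try exact Hc.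
  - apply walk_fw; constructor.
  - apply walk_bw; constructor.
Qed.

Definition endp {G : graph} (x : gpoint G) (a : gV G) (o : R) : Prop :=
  match x with
  | Vtx v => a = v /\ o = 0
  | Ept e s => (a = gsrc G e /\ o = s) \/ (a = gtgt G e /\ o = 1 - s)
  end.

Lemma via_le (G : graph) (x y : gpoint G) a o b o' :
  endp x a o -> endp y b o' -> via_ends x y <= o + vdist G a b + o'.
Proof.
  destruct x as [u|e s]; destruct y as [v|e' t]; simpl;
  intros H1 H2; unfold via_ends; simpl.
  - destruct H1 as [-> ->]; destruct H2 as [-> ->]; lra.
  - destruct H1 as [-> ->].
    destruct H2 as [[-> ->]|[-> ->]].
    + eapply Rle_trans; [apply Rmin_l|lra].
    + eapply Rle_trans; [apply Rmin_r|lra].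
  - destruct H2 as [-> ->].
    destruct H1 as [[-> ->]|[-> ->]].
    + eapply Rle_trans; [apply Rmin_l|lra].
    + eapply Rle_trans; [apply Rmin_r|lra].
  - destruct H1 as [[-> ->]|[-> ->]]; destruct H2 as [[-> ->]|[-> ->]].
    + eapply Rle_trans; [apply Rmin_l|]. eapply Rle_trans; [apply Rmin_l|lra].
    + eapply Rle_trans; [apply Rmin_l|]. eapply Rle_trans; [apply Rmin_r|lra].
    + eapply Rle_trans; [apply Rmin_r|]. eapply Rle_trans; [apply Rmin_l|lra].
    + eapply Rle_trans; [apply Rmin_r|]. eapply Rle_trans; [apply Rmin_r|lra].
Qed.

Lemma via_attain (G : graph) (x y : gpoint G) :
  exists a o b o', endp x a o /\ endp y b o' /\ via_ends x y = o + vdist G a b + o'.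
Proof.
  destruct x as [u|e s]; destruct y as [v|e' t]; unfold via_ends; simpl.
  - exists u, 0, v, 0. repeat split; lra.
  - apply Rmin_case.
    + exists u, 0, (gsrc G e'), t. repeat split; auto; lra.
    + exists u, 0, (gtgt G e'), (1 - t). repeat split; auto; lra.
  - apply Rmin_case.
    + exists (gsrc G e), s, v, 0. repeat split; auto; lra.
    + exists (gtgt G e), (1 - s), v, 0. repeat split; auto; lra.
  - apply Rmin_case; apply Rmin_case.
    + exists (gsrc G e), s, (gsrc G e'), t. repeat split; auto.
    + exists (gsrc G e), s, (gtgt G e'), (1-t). repeat split; auto.
    + exists (gtgt G e), (1-s), (gsrc G e'), t. repeat split; auto.
    + exists (gtgt G e), (1-s), (gtgt G e'), (1-t). repeat split; auto.
Qed.

Lemma endp_valid (G : graph) (x : gpoint G) a o : valid_point x -> endp x a o -> 0 <= o.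
Proof.
  destruct x; simpl; intros; [lra|]. destruct H0 as [[_ ->]|[_ ->]]; lra.
Qed.

Lemma endp_pair (G : graph) (Hc : connected_graph G) (y : gpoint G) b o1 b' o2 :
  valid_point y -> endp y b o1 -> endp y b' o2 -> vdist G b b' <= o1 + o2.
Proof.
  destruct y as [v|e s]; simpl; intros Hv H1 H2.
  - destruct H1 as [-> ->]; destruct H2 as [-> ->]. rewrite vdist_refl; auto; lra.
  - pose proof (vdist_edge G Hc e).
    destruct H1 as [[-> ->]|[-> ->]]; destruct H2 as [[-> ->]|[-> ->]];
    try (rewrite vdist_refl; auto; lra); lra.
Qed.

Lemma via_tri (G : graph) (Hc : connected_graph G) (x y z : gpoint G) :
  valid_point y -> via_ends x z <= via_ends x y + via_ends y z.
Proof.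
  intros Hy.
  destruct (via_attain G x y) as (a & o1 & b & o2 & Ha & Hb & E1).
  destruct (via_attain G y z) as (b' & o3 & c & o4 & Hb' & Hc' & E2).
  rewrite E1, E2.
  eapply Rle_trans; [apply (via_le G x z a o1 c o4 Ha Hc')|].
  pose proof (endp_pair G Hc y b o2 b' o3 Hy Hb Hb').
  pose proof (vdist_tri G Hc a b c). pose proof (vdist_tri G Hc b b' c). lra.
Qed.

Lemma via_nonneg (G : graph) (x y : gpoint G) :
  valid_point x -> valid_point y -> 0 <= via_ends x y.
Proof.
  intros Hx Hy. destruct (via_attain G x y) as (a & o1 & b & o2 & Ha & Hb & E1).
  rewrite E1. pose proof (endp_valid G x a o1 Hx Ha).
  pose proof (endp_valid G y b o2 Hy Hb). pose proof (vdist_nonneg G a b). lra.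
Qed.

Lemma via_sym (G : graph) (Hc : connected_graph G) (x y : gpoint G) :
  via_ends x y = via_ends y x.
Proof.
  assert (forall x y : gpoint G, via_ends x y <= via_ends y x).
  { intros p q. destruct (via_attain G q p) as (a & o1 & b & o2 & Ha & Hb & E1).
    rewrite E1. eapply Rle_trans; [apply (via_le G p q b o2 a o1 Hb Ha)|].
    rewrite (vdist_sym G Hc b a). lra. }
  apply Rle_antisym; auto.
Qed.

Lemma via_shift (G : graph) e s t (z : gpoint G) :
  via_ends (Ept e s) z <= Rabs (s - t) + via_ends (Ept e t) z.
Proof.
  destruct (via_attain G (Ept e t) z) as (a & o1 & b & o2 & Ha & Hb & E1).
  rewrite E1. simpl in Ha.
  destruct Ha as [[-> ->]|[-> ->]].
  - eapply Rle_trans; [apply (via_le G _ z (gsrc G e) s b o2); simpl; auto|].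
    pose proof (Rle_abs (s - t)); lra.
  - eapply Rle_trans; [apply (via_le G _ z (gtgt G e) (1 - s) b o2); simpl; auto|].
    pose proof (Rle_abs (- (s - t))); rewrite Rabs_Ropp in H; lra.
Qed.

Lemma gdist_le_via (G : graph) (x y : gpoint G) : gdist x y <= via_ends x y.
Proof.
  destruct x as [u|e s]; destruct y as [v|e' t]; simpl; try lra.
  destruct (excluded_middle_informative (e = e')); [apply Rmin_r|lra].
Qed.

Lemma gdist_cases (G : graph) (x y : gpoint G) :
  gdist x y = via_ends x y \/
  exists e s t, x = Ept e s /\ y = Ept e t /\ gdist x y = Rabs (s - t).
Proof.
  destruct x as [u|e s]; destruct y as [v|e' t]; simpl; auto.
  destruct (excluded_middle_informative (e = e')) as [<-|]; auto.
  apply Rmin_case; auto. right; exists e, s, t; auto.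
Qed.

Lemma gdist_same (G : graph) e s t : gdist (G:=G) (Ept e s) (Ept e t) <= Rabs (s - t).
Proof.
  simpl. destruct (excluded_middle_informative (e = e)); [apply Rmin_l|congruence].
Qed.

Lemma gdist_nonneg (G : graph) (x y : gpoint G) :
  valid_point x -> valid_point y -> 0 <= gdist x y.
Proof.
  intros Hx Hy. destruct (gdist_cases G x y) as [->|(e&s&t&_&_&->)].
  - apply via_nonneg; auto.
  - apply Rabs_pos.
Qed.

Lemma gdist_sym (G : graph) (Hc : connected_graph G) (x y : gpoint G) :
  gdist x y = gdist y x.
Proof.
  destruct x as [u|e s]; destruct y as [v|e1 t]; cbn -[via_ends];
    try (apply via_sym; auto; fail).
  destruct (excluded_middle_informative (e = e1)) as [E1|n1];
  destruct (excluded_middle_informative (e1 = e)) as [E2|n2]; try congruence.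
  - subst. rewrite Rabs_minus_sym, via_sym; auto.
  - apply via_sym; auto.
Qed.

Lemma gdist_tri (G : graph) (Hc : connected_graph G) (x y z : gpoint G) :
  valid_point y -> gdist x z <= gdist x y + gdist y z.
Proof.
  intros Hy.
  destruct (gdist_cases G y z) as [E2|(e'&t'&u&Ey&Ez&E2)];
  destruct (gdist_cases G x y) as [E1|(e&s&t&Ex&Ey'&E1)]; rewrite E1, E2.
  - eapply Rle_trans; [apply gdist_le_via|]. apply via_tri; auto.
  - subst x y. eapply Rle_trans; [apply gdist_le_via|]. apply via_shift.
  - subst y z. eapply Rle_trans; [apply gdist_le_via|].
    rewrite (via_sym G Hc x), (via_sym G Hc x (Ept e' t')).
    pose proof (via_shift G e' u t' x). rewrite Rabs_minus_sym in H. lra.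
  - subst. injection Ey' as E3 E4. subst.
    eapply Rle_trans; [apply gdist_same|].
    replace (s - u) with ((s - t) + (t - u)) by ring. apply Rabs_triang.
Qed.

Definition startv {G : graph} (p : gE G * bool) : gV G :=
  if snd p then gsrc G (fst p) else gtgt G (fst p).
Definition endv {G : graph} (p : gE G * bool) : gV G :=
  if snd p then gtgt G (fst p) else gsrc G (fst p).

Lemma comb_se (G : graph) n f h : is_comb_cycle G n f h ->
  forall i, (i < n)%nat -> startv (h i) = f i /\ endv (h i) = f (Nat.modulo (i + 1) n).
Proof.
  intros [_ H] i Hi. specialize (H i Hi). unfold startv, endv.
  destruct (h i) as [e []]; simpl in *; tauto.
Qed.

Definition idx (n : nat) (z : Z) : nat := Z.to_nat (Z.modulo z (Z.of_nat n)).

Lemma idx_lt n z : (0 < n)%nat -> (idx n z < n)%nat.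
Proof.
  intros Hn. unfold idx.
  assert (0 <= z mod Z.of_nat n < Z.of_nat n)%Z by (apply Z.mod_pos_bound; lia). lia.
Qed.

Lemma idx_succ n z : (0 < n)%nat -> Nat.modulo (idx n z + 1) n = idx n (z + 1).
Proof.
  intros Hn. unfold idx.
  assert (0 <= z mod Z.of_nat n < Z.of_nat n)%Z by (apply Z.mod_pos_bound; lia).
  apply Nat2Z.inj. rewrite Nat2Z.inj_mod, Nat2Z.inj_add, Z2Nat.id by lia.
  rewrite Z2Nat.id by (apply Z.mod_pos_bound; lia).
  simpl. rewrite Zplus_mod_idemp_l. reflexivity.
Qed.

Lemma idx_period n z k : (0 < n)%nat -> idx n (z + k * Z.of_nat n) = idx n z.
Proof.
  intros Hn. unfold idx. rewrite Z_mod_plus_full. reflexivity.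
Qed.

Lemma Int_part_add x k : Int_part (x + IZR k) = (Int_part x + k)%Z.
Proof.
  symmetry. apply Int_part_spec. rewrite plus_IZR.
  pose proof (base_Int_part x). lra.
Qed.

Lemma Int_part_IZR k : Int_part (IZR k) = k.
Proof. symmetry. apply Int_part_spec. lra. Qed.

Lemma cp_unfold (G : graph) n h x :
  cycle_pt G n h x =
  match h (idx n (Int_part x)) with
  | (e, true) => Ept e (x - IZR (Int_part x))
  | (e, false) => Ept e (1 - (x - IZR (Int_part x)))
  end.
Proof. reflexivity. Qed.

Lemma frac_bounds x : 0 <= x - IZR (Int_part x) < 1.
Proof. pose proof (base_Int_part x). lra. Qed.

Lemma cp_valid (G : graph) n h x : valid_point (cycle_pt G n h x).
Proof.
  rewrite cp_unfold. pose proof (frac_bounds x).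
  destruct (h _) as [e []]; simpl; lra.
Qed.

Lemma cp_start (G : graph) (Hc : connected_graph G) n h x :
  gdist (cycle_pt G n h x) (Vtx (startv (h (idx n (Int_part x)))))
  <= x - IZR (Int_part x).
Proof.
  rewrite cp_unfold. unfold startv.
  destruct (h _) as [e []]; simpl fst; simpl snd; cbn -[via_ends];
  (eapply Rle_trans; [eapply via_le; simpl|]).
  - left; split; reflexivity.
  - split; reflexivity.
  - rewrite vdist_refl; auto; lra.
  - right; split; reflexivity.
  - split; reflexivity.
  - rewrite vdist_refl; auto; lra.
Qed.

Lemma cp_end (G : graph) (Hc : connected_graph G) n h x :
  gdist (cycle_pt G n h x) (Vtx (endv (h (idx n (Int_part x)))))
  <= 1 - (x - IZR (Int_part x)).
Proof.
  rewrite cp_unfold. unfold endv.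
  destruct (h _) as [e []]; simpl fst; simpl snd; cbn -[via_ends];
  (eapply Rle_trans; [eapply via_le; simpl|]).
  - right; split; reflexivity.
  - split; reflexivity.
  - rewrite vdist_refl; auto; lra.
  - left; split; reflexivity.
  - split; reflexivity.
  - rewrite vdist_refl; auto; lra.
Qed.

Lemma cp_same (G : graph) n h x y : Int_part x = Int_part y ->
  gdist (cycle_pt G n h x) (cycle_pt G n h y) <= Rabs (x - y).
Proof.
  intros E. rewrite !cp_unfold, <- E.
  destruct (h _) as [e []]; (eapply Rle_trans; [apply gdist_same|]); right.
  - f_equal; ring.
  - rewrite Rabs_minus_sym. f_equal; ring.
Qed.

Lemma cp_period (G : graph) n h x k : (0 < n)%nat ->
  cycle_pt G n h (x + IZR k * INR n) = cycle_pt G n h x.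
Proof.
  intros Hn. rewrite !cp_unfold.
  rewrite INR_IZR_INZ, <- mult_IZR, Int_part_add, idx_period by exact Hn.
  rewrite plus_IZR. replace (x + IZR (k * Z.of_nat n) - (IZR (Int_part x) + IZR (k * Z.of_nat n)))
    with (x - IZR (Int_part x)) by ring. reflexivity.
Qed.

Definition Fv {G : graph} n (f : nat -> gV G) (z : Z) := f (idx n z).

Lemma Fv_step (G : graph) (Hc : connected_graph G) n f h : is_comb_cycle G n f h ->
  forall z, startv (h (idx n z)) = Fv n f z /\ endv (h (idx n z)) = Fv n f (z + 1).
Proof.
  intros Hcy z. pose proof (proj1 Hcy) as Hn.
  destruct (comb_se G n f h Hcy (idx n z) (idx_lt n z Hn)) as [E1 E2].
  unfold Fv. rewrite <- idx_succ by exact Hn. auto.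
Qed.

Lemma Fv_chain (G : graph) (Hc : connected_graph G) n f h : is_comb_cycle G n f h ->
  forall (k : nat) z, vdist G (Fv n f z) (Fv n f (z + Z.of_nat k)) <= INR k.
Proof.
  intros Hcy k. induction k as [|k IH]; intros z.
  - simpl. rewrite Z.add_0_r, vdist_refl; auto. lra.
  - eapply Rle_trans; [apply (vdist_tri G Hc _ (Fv n f (z + Z.of_nat k)))|].
    rewrite S_INR. apply Rplus_le_compat; [apply IH|].
    destruct (Fv_step G Hc n f h Hcy (z + Z.of_nat k)) as [E1 E2].
    replace (z + Z.of_nat (S k))%Z with (z + Z.of_nat k + 1)%Z by lia.
    rewrite <- E1, <- E2. unfold startv, endv.
    destruct (h _) as [e []]; simpl; apply vdist_edge; auto.
Qed.

Lemma gdist_VV (G : graph) u v : gdist (G:=G) (Vtx u) (Vtx v) = vdist G u v.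
Proof. reflexivity. Qed.

Lemma cp_lip (G : graph) (Hc : connected_graph G) n f h : is_comb_cycle G n f h ->
  forall x y, x <= y -> gdist (cycle_pt G n h x) (cycle_pt G n h y) <= y - x.
Proof.
  intros Hcy x y Hxy.
  pose proof (base_Int_part x) as Bx. pose proof (base_Int_part y) as By.
  set (a := Int_part x) in *. set (b := Int_part y) in *.
  assert (Hab : (a <= b)%Z).
  { apply Z.lt_succ_r. apply lt_IZR. rewrite succ_IZR. lra. }
  destruct (Z.eq_dec a b) as [E|Ne].
  - eapply Rle_trans; [apply cp_same; exact E|]. rewrite Rabs_minus_sym.
    right; apply Rabs_right; lra.
  - destruct (Fv_step G Hc n f h Hcy a) as [_ Ea].
    destruct (Fv_step G Hc n f h Hcy b) as [Eb _].
    pose proof (cp_end G Hc n h x) as H1. fold a in H1. rewrite Ea in H1.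
    pose proof (cp_start G Hc n h y) as H2. fold b in H2. rewrite Eb in H2.
    rewrite gdist_sym in H2 by exact Hc.
    pose proof (Fv_chain G Hc n f h Hcy (Z.to_nat (b - a - 1)) (a + 1)) as H3.
    rewrite Z2Nat.id in H3 by lia.
    replace (a + 1 + (b - a - 1))%Z with b in H3 by ring.
    rewrite INR_IZR_INZ, Z2Nat.id in H3 by lia.
    rewrite minus_IZR, minus_IZR in H3.
    eapply Rle_trans; [apply (gdist_tri G Hc _ (Vtx (Fv n f (a + 1)))); exact I|].
    eapply Rle_trans; [apply Rplus_le_compat_l; apply (gdist_tri G Hc _ (Vtx (Fv n f b))); exact I|].
    rewrite gdist_VV. lra.
Qed.

Lemma cp_int (G : graph) (Hc : connected_graph G) n f h : is_comb_cycle G n f h ->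
  forall z, gdist (cycle_pt G n h (IZR z)) (Vtx (Fv n f z)) <= 0.
Proof.
  intros Hcy z. pose proof (cp_start G Hc n h (IZR z)) as H.
  rewrite Int_part_IZR in H. destruct (Fv_step G Hc n f h Hcy z) as [E _].
  rewrite E in H. lra.
Qed.

Lemma nat_above r : exists N : nat, r < INR N.
Proof.
  destruct (archimed r) as [H1 _]. exists (Z.to_nat (up r)).
  destruct (Z_lt_le_dec (up r) 0) as [Hl|Hl].
  - apply IZR_lt in Hl. pose proof (pos_INR (Z.to_nat (up r))). lra.
  - rewrite INR_IZR_INZ, Z2Nat.id by exact Hl. lra.
Qed.

Lemma cp_upper (G : graph) (Hc : connected_graph G) n f h : is_comb_cycle G n f h ->
  forall x y, Rabs (x - y) <= INR n ->
  gdist (cycle_pt G n h x) (cycle_pt G n h y) <= Rmin (Rabs (x - y)) (INR n - Rabs (x - y)).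
Proof.
  intros Hcy.
  assert (Hn : (0 < n)%nat) by exact (proj1 Hcy).
  assert (W : forall x y, x <= y -> y - x <= INR n ->
    gdist (cycle_pt G n h x) (cycle_pt G n h y) <= Rmin (y - x) (INR n - (y - x))).
  { intros x y Hxy Hl. apply Rmin_glb.
    - apply (cp_lip G Hc n f h Hcy); lra.
    - rewrite <- (cp_period G n h x 1 Hn). rewrite gdist_sym by exact Hc.
      eapply Rle_trans; [apply (cp_lip G Hc n f h Hcy); lra|]. lra. }
  intros x y Hl. destruct (Rle_dec x y) as [Hxy|Hxy].
  - rewrite Rabs_minus_sym, Rabs_right by lra. apply W; auto.
    rewrite Rabs_minus_sym, Rabs_right in Hl by lra. lra.
  - rewrite Rabs_right by lra. rewrite gdist_sym by exact Hc. apply W; [lra|].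
    rewrite Rabs_right in Hl by lra. lra.
Qed.

Lemma absmid (t n : R) : 0 <= t <= n ->
  Rabs (t - n / 2) = n / 2 - Rmin t (n - t).
Proof.
  intros Hl. unfold Rmin; destruct Rle_dec.
  - rewrite Rabs_left1 by lra. lra.
  - rewrite Rabs_right by lra. lra.
Qed.

Lemma cp_lower (G : graph) (Hc : connected_graph G) n f h K : is_comb_cycle G n f h ->
  almost_isometric_cycle G K n h ->
  forall x y, Rabs (x - y) <= INR n ->
  (1 / K) * (INR n / 2) - INR n / 2 + Rmin (Rabs (x - y)) (INR n - Rabs (x - y))
  <= gdist (cycle_pt G n h x) (cycle_pt G n h y).
Proof.
  intros Hcy Ha.
  assert (W : forall x y, x <= y -> y - x <= INR n ->
    (1 / K) * (INR n / 2) - INR n / 2 + Rmin (y - x) (INR n - (y - x))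
    <= gdist (cycle_pt G n h x) (cycle_pt G n h y)).
  { intros x y Hxy Hl.
    pose proof (Ha x) as H1. apply Rge_le in H1.
    pose proof (gdist_tri G Hc (cycle_pt G n h x) (cycle_pt G n h y)
       (cycle_pt G n h (x + INR n / 2)) (cp_valid G n h y)) as H2.
    assert (H3 : gdist (cycle_pt G n h y) (cycle_pt G n h (x + INR n / 2))
                 <= Rabs ((y - x) - INR n / 2)).
    { destruct (Rle_dec y (x + INR n / 2)).
      - rewrite Rabs_left1 by lra.
        replace (- (y - x - INR n / 2)) with ((x + INR n / 2) - y) by ring.
        apply (cp_lip G Hc n f h Hcy). lra.
      - rewrite Rabs_right by lra. rewrite gdist_sym by exact Hc.
        replace (y - x - INR n / 2) with (y - (x + INR n / 2)) by ring.
        apply (cp_lip G Hc n f h Hcy). lra. }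
    rewrite absmid in H3 by lra. lra. }
  intros x y Hl. destruct (Rle_dec x y) as [Hxy|Hxy].
  - rewrite Rabs_minus_sym, Rabs_right by lra. apply W; auto.
    rewrite Rabs_minus_sym, Rabs_right in Hl by lra. lra.
  - rewrite Rabs_right by lra. rewrite gdist_sym by exact Hc. apply W; [lra|].
    rewrite Rabs_right in Hl by lra. lra.
Qed.

Lemma max_min_INR i j : INR (Nat.max i j - Nat.min i j) = Rabs (INR i - INR j).
Proof.
  destruct (Nat.le_ge_cases i j) as [H|H].
  - rewrite Nat.max_r, Nat.min_l by exact H. rewrite minus_INR by exact H.
    rewrite Rabs_minus_sym. apply le_INR in H. rewrite Rabs_right; lra.
  - rewrite Nat.max_l, Nat.min_r by exact H. rewrite minus_INR by exact H.
    apply le_INR in H. rewrite Rabs_right; lra.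
Qed.

Lemma Rmin_mult_l a b c : 0 <= a -> Rmin (a * b) (a * c) = a * Rmin b c.
Proof.
  intros Ha. unfold Rmin. destruct (Rle_dec (a * b) (a * c)); destruct (Rle_dec b c);
  try reflexivity.
  all: assert (a = 0 \/ 0 < a) as [->|] by lra; try ring.
  all: try (assert (a * b <= a * c) by (apply Rmult_le_compat_l; auto); contradiction).
  all: exfalso; nra.
Qed.

Lemma dir2 (G : graph) (Hc : connected_graph G) :
  ~ strongly_shortcut_graph G -> approximates_ngons G.
Proof.
  intros HnSS K HK m L.
  assert (Hx : forall K', 1 < K' -> forall N, exists n f h, is_comb_cycle G n f h /\
            almost_isometric_cycle G K' n h /\ (N < n)%nat).
  { intros K' HK' N. apply NNPP; intro Hno. apply HnSS. exists K'. split; auto.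
    exists N. intros n f h Hcy Ha. destruct (le_lt_dec n N); auto.
    exfalso; apply Hno; exists n, f, h; auto. }
  destruct (Nat.eq_dec m 0) as [Hm0|Hm0].
  { destruct (Hx 2 ltac:(lra) 0%nat) as (n&f&h&_&_&_).
    exists (Rabs L + 1). split; [pose proof (Rabs_pos L); lra|].
    split; [pose proof (Rle_abs L); lra|].
    exists (fun _ => Vtx (f 0%nat)). split; intros; lia. }
  set (M := INR m).
  assert (HM : 1 <= M) by (unfold M; change 1 with (INR 1); apply le_INR; lia).
  set (k := 1 / K).
  assert (Hk : 0 < k < 1).
  { unfold k. split; [apply Rdiv_lt_0_compat; lra|].
    apply (Rmult_lt_reg_r K); [lra|]. unfold Rdiv. rewrite Rmult_assoc, Rinv_l by lra. lra. }
  set (eps := (1 - k) / M).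
  assert (He : 0 < eps < 1).
  { unfold eps. split; [apply Rdiv_lt_0_compat; lra|].
    apply (Rmult_lt_reg_r M); [lra|]. unfold Rdiv. rewrite Rmult_assoc, Rinv_l by lra. lra. }
  assert (HK' : 1 < / (1 - eps)).
  { rewrite <- Rinv_1. apply Rinv_lt_contravar; lra. }
  destruct (nat_above (M * L)) as [N HN].
  destruct (Hx _ HK' N) as (n&f&h&Hcy&Ha&HnN).
  assert (Hn : (0 < n)%nat) by exact (proj1 Hcy).
  set (lam := INR n / M).
  assert (HnM : INR n = lam * M) by (unfold lam; field; lra).
  assert (Hlam : 0 < lam).
  { unfold lam. apply Rdiv_lt_0_compat; [apply lt_0_INR; exact Hn|lra]. }
  exists lam. split; [exact Hlam|]. split.
  { apply (Rmult_lt_reg_r M); [lra|]. rewrite <- HnM.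
    apply lt_INR in HnN. lra. }
  exists (fun i => cycle_pt G n h (INR i * lam)). split.
  { intros; apply cp_valid. }
  intros i j Hi Hj. unfold cyc_dist. rewrite max_min_INR.
  set (d := Rabs (INR i - INR j)).
  assert (Hd : Rabs (INR i * lam - INR j * lam) = lam * d).
  { unfold d. replace (INR i * lam - INR j * lam) with (lam * (INR i - INR j)) by ring.
    rewrite Rabs_mult, Rabs_right by lra. reflexivity. }
  assert (HdM : d <= M).
  { unfold d, M. rewrite <- max_min_INR. apply le_INR. lia. }
  assert (Hd0 : 0 <= d) by apply Rabs_pos.
  assert (Hmin : Rmin (lam * d) (INR n - lam * d) = lam * Rmin d (M - d)).
  { rewrite HnM, <- Rmin_mult_l by lra. f_equal. ring. }
  assert (Hc0 : 0 <= Rmin d (M - d)) by (apply Rmin_glb; lra).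
  pose proof (cp_upper G Hc n f h Hcy (INR i * lam) (INR j * lam)) as Hup.
  pose proof (cp_lower G Hc n f h _ Hcy Ha (INR i * lam) (INR j * lam)) as Hlo.
  rewrite Hd in Hup, Hlo. rewrite Hmin in Hup, Hlo.
  assert (Hle : lam * d <= INR n) by (rewrite HnM; apply Rmult_le_compat_l; lra).
  specialize (Hup Hle). specialize (Hlo Hle).
  split.
  - destruct (Nat.eq_dec i j) as [->|Hij].
    + unfold d. pose proof (pos_INR m). rewrite Rminus_diag, Rabs_R0, Rmin_left by lra.
      rewrite Rmult_0_r, Rmult_0_r. apply gdist_nonneg; apply cp_valid.
    + assert (HD : 1 <= d /\ d <= M - 1).
      { unfold d, M. rewrite <- max_min_INR. split.
        - change 1 with (INR 1). apply le_INR. lia.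
        - change (INR m - 1) with (INR m - INR 1). rewrite <- minus_INR by lia. apply le_INR. lia. }
      assert (Hc1 : 1 <= Rmin d (M - d)) by (apply Rmin_glb; lra).
      replace (1 / / (1 - eps)) with (1 - eps) in Hlo by (field; lra).
      assert (HeM : eps * M = 1 - k) by (unfold eps; field; lra).
      fold k.
      assert (0 <= (1 - k) * lam * (Rmin d (M - d) - 1 / 2)).
      { apply Rmult_le_pos; [apply Rmult_le_pos; lra|lra]. }
      rewrite HnM in Hlo. fold M.
      assert (E : (1 - eps) * (lam * M / 2) - lam * M / 2 = - (1-k) * lam / 2) by (unfold eps; field; lra).
      rewrite E in Hlo. nra.
  - fold M. eapply Rle_trans; [exact Hup|].
    rewrite <- (Rmult_1_l (lam * _)) at 1. apply Rmult_le_compat_r; [|lra].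
    apply Rmult_le_pos; lra.
Qed.

Fixpoint is_path {G : graph} (u : gV G) (p : list (gE G * bool)) (v : gV G) : Prop :=
  match p with
  | nil => u = v
  | eb :: q => startv eb = u /\ is_path (endv eb) q v
  end.

Lemma walk_path (G : graph) u v n : walk G u v n ->
  exists p, is_path u p v /\ length p = n.
Proof.
  induction 1 as [v|e v n _ [p [Hp Hl]]|e v n _ [p [Hp Hl]]].
  - exists nil; simpl; auto.
  - exists ((e, true) :: p). simpl. unfold startv, endv; simpl. auto.
  - exists ((e, false) :: p). simpl. unfold startv, endv; simpl. auto.
Qed.

Lemma path_app (G : graph) u p v q w : is_path (G:=G) u p v -> is_path v q w ->
  is_path u (p ++ q) w.
Proof.
  revert u; induction p as [|eb p IH]; simpl; intros u H1 H2.
  - subst; auto.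
  - destruct H1; split; auto.
Qed.

Lemma path_consec (G : graph) u p v d : is_path (G:=G) u p v ->
  forall i, (S i < length p)%nat -> endv (nth i p d) = startv (nth (S i) p d).
Proof.
  revert u; induction p as [|eb p IH]; simpl; intros u H i Hi; [lia|].
  destruct H as [_ H]. destruct i as [|i].
  - destruct p as [|eb' p]; simpl in *; [lia|]. symmetry; apply H.
  - apply (IH _ H). lia.
Qed.

Lemma path_first (G : graph) u p v d : is_path (G:=G) u p v -> p <> nil ->
  startv (nth 0 p d) = u.
Proof. destruct p; simpl; intros; [congruence|tauto]. Qed.

Lemma path_last (G : graph) u p v d : is_path (G:=G) u p v -> p <> nil ->
  endv (nth (length p - 1) p d) = v.
Proof.
  revert u; induction p as [|eb p IH]; simpl; intros u H Hn; [congruence|].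
  destruct H as [_ H]. destruct p as [|eb' p].
  - simpl in *. auto.
  - replace (length (eb' :: p) - 0)%nat with (S (length (eb' :: p) - 1)) by (simpl; lia).
    apply (IH _ H). congruence.
Qed.

Definition segp (G : graph) (u v : gV G) : list (gE G * bool) :=
  epsilon (inhabits nil) (fun p => is_path u p v /\ length p = vn G u v).

Lemma segp_spec (G : graph) (Hc : connected_graph G) u v :
  is_path u (segp G u v) v /\ length (segp G u v) = vn G u v.
Proof.
  unfold segp. apply epsilon_spec. apply walk_path. apply vdist_walk; exact Hc.
Qed.

Definition bigp (G : graph) (v : nat -> gV G) (a k : nat) :=
  flat_map (fun i => segp G (v i) (v (S i))) (seq a k).

Lemma bigp_path (G : graph) (Hc : connected_graph G) v k : forall a,
  is_path (v a) (bigp G v a k) (v (a + k)%nat).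
Proof.
  induction k as [|k IH]; intros a; simpl.
  - rewrite Nat.add_0_r; reflexivity.
  - eapply path_app; [apply segp_spec; exact Hc|].
    replace (a + S k)%nat with (S a + k)%nat by lia. apply IH.
Qed.

Lemma bigp_len_S (G : graph) (Hc : connected_graph G) v i :
  length (bigp G v 0 (S i)) = (length (bigp G v 0 i) + vn G (v i) (v (S i)))%nat.
Proof.
  unfold bigp. rewrite seq_S, flat_map_app, length_app. simpl.
  rewrite app_nil_r. f_equal. apply segp_spec; exact Hc.
Qed.

Lemma bigp_split (G : graph) v m i : (i <= m)%nat ->
  bigp G v 0 m = bigp G v 0 i ++ bigp G v i (m - i).
Proof.
  intros H. unfold bigp. rewrite <- flat_map_app. f_equal.
  replace m with (i + (m - i))%nat at 1 by lia. rewrite seq_app. reflexivity.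
Qed.

Lemma comb_from_se (G : graph) n f h : (0 < n)%nat ->
  (forall i, (i < n)%nat -> startv (h i) = f i /\ endv (h i) = f (Nat.modulo (i + 1) n)) ->
  is_comb_cycle G n f h.
Proof.
  intros Hn H. split; auto. intros i Hi. specialize (H i Hi). unfold startv, endv in H.
  destruct (h i) as [e []]; simpl in *; tauto.
Qed.

Lemma idx_nat n p : (0 < n)%nat -> idx n (Z.of_nat p) = Nat.modulo p n.
Proof.
  intros Hn. unfold idx. apply Nat2Z.inj. rewrite Z2Nat.id.
  - rewrite Nat2Z.inj_mod. reflexivity.
  - apply Z.mod_pos_bound. lia.
Qed.

Lemma build (G : graph) (Hc : connected_graph G) (v : nat -> gV G) m :
  v m = v 0%nat -> (0 < length (bigp G v 0 m))%nat ->
  exists f h, is_comb_cycle G (length (bigp G v 0 m)) f h /\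
    forall i, (i <= m)%nat ->
      Fv (length (bigp G v 0 m)) f (Z.of_nat (length (bigp G v 0 i))) = v i.
Proof.
  intros Hvm Hl.
  set (big := bigp G v 0 m) in *.
  assert (Hp : is_path (v 0%nat) big (v 0%nat)).
  { rewrite <- Hvm at 2. apply (bigp_path G Hc v m 0). }
  assert (Hne : big <> nil) by (intro E; rewrite E in Hl; simpl in Hl; lia).
  destruct big as [|d0 rest] eqn:Eb; [congruence|]. rewrite <- Eb in *.
  set (l := length big) in *.
  set (h := fun k => nth k big d0).
  set (f := fun k => startv (h k)).
  exists f, h. split.
  - apply comb_from_se; auto. intros i Hi. split; [reflexivity|].
    unfold f, h. destruct (Nat.eq_dec (i + 1) l) as [E|E].
    + rewrite E, Nat.Div0.mod_same. rewrite (path_first G _ big _ d0 Hp Hne).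
      replace i with (length big - 1)%nat by (unfold l in E; lia).
      apply (path_last G _ big _ d0 Hp Hne).
    + rewrite Nat.mod_small by lia. replace (i + 1)%nat with (S i) by lia.
      apply (path_consec G _ big _ d0 Hp). unfold l in *; lia.
  - intros i Hi. unfold Fv. rewrite idx_nat by lia.
    assert (Hs := bigp_split G v m i Hi). fold big in Hs.
    assert (Hp2 := bigp_path G Hc v (m - i) i).
    replace (i + (m - i))%nat with m in Hp2 by lia. rewrite Hvm in Hp2.
    assert (Hlen : l = (length (bigp G v 0 i) + length (bigp G v i (m - i)))%nat).
    { unfold l. rewrite Hs, length_app. reflexivity. }
    destruct (bigp G v i (m - i)) as [|d1 r1] eqn:E2.
    + simpl in Hp2. rewrite Hp2. simpl in Hlen. rewrite Nat.add_0_r in Hlen. rewrite <- Hlen. fold l. rewrite Nat.Div0.mod_same.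
      unfold f, h. apply (path_first G _ big _ d0 Hp Hne).
    + rewrite Nat.mod_small by (simpl in Hlen; lia).
      unfold f, h. rewrite Hs, app_nth2 by lia. rewrite Nat.sub_diag.
      apply (path_first G _ (d1 :: r1) _ d0 Hp2). congruence.
Qed.

Definition nearv {G : graph} (p : gpoint G) : gV G :=
  match p with Vtx v => v | Ept e _ => gsrc G e end.

Lemma nearv_close (G : graph) (Hc : connected_graph G) (p : gpoint G) :
  valid_point p -> gdist p (Vtx (nearv p)) <= 1.
Proof.
  destruct p as [v|e s]; simpl; intros Hv.
  - rewrite vdist_refl; auto; lra.
  - eapply Rle_trans; [apply (via_le G (Ept e s) (Vtx (gsrc G e)) (gsrc G e) s (gsrc G e) 0)|].
    + simpl; auto.
    + simpl; auto.
    + rewrite vdist_refl; auto; lra.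
Qed.

Lemma seg_locate (P : nat -> R) m y : P 0%nat = 0 -> 0 <= y -> y < P m ->
  exists i, (i < m)%nat /\ P i <= y /\ y < P (S i).
Proof.
  intros H0 Hy. induction m as [|m IH]; intros Hm; [lra|].
  destruct (Rlt_dec y (P m)) as [Hl|Hl].
  - destruct (IH Hl) as [i [Hi Hi']]. exists i; split; [lia|auto].
  - exists m; split; [lia|]. lra.
Qed.

Lemma steps_bounds (P : nat -> R) A B m :
  (forall i, (i < m)%nat -> B <= P (S i) - P i <= A) ->
  forall a b, (a <= b)%nat -> (b <= m)%nat ->
  INR (b - a) * B <= P b - P a <= INR (b - a) * A.
Proof.
  intros H a b Hab. induction b as [|b IH]; intros Hb.
  - replace a with 0%nat by lia. simpl. lra.
  - destruct (Nat.eq_dec a (S b)) as [->|Ne].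
    + rewrite Nat.sub_diag. simpl. lra.
    + assert (a <= b)%nat by lia. specialize (IH H0 ltac:(lia)).
      specialize (H b ltac:(lia)).
      replace (S b - a)%nat with (S (b - a)) by lia. rewrite S_INR. lra.
Qed.

Lemma final_ineq q K lam A l m :
  1 < q -> 1 < K -> K <= 2 -> 8 * (K - 1) <= q - 1 ->
  32 <= lam * (q - 1) -> 8 <= lam -> A = K * lam + 2 ->
  m * (lam / K - 2) <= l -> 48 * q * (q + 1) <= m * (q - 1) -> 0 <= m ->
  (1 / q) * (l / 2) <= (1 / K) * (lam * (l / (2 * A) - 1)) - 2 * (A + 1).
Proof.
  intros Hq HK HK2 HKq Hlq Hl8 HA Hlm Hm Hm0.
  assert (HK2' : K * K <= 1 + 3 * (K - 1)) by nra.
  assert (HKA : 2 * K * A <= lam * (1 + q)) by (subst A; nra).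
  assert (HAp : 0 < A) by (subst A; nra).
  assert (Hlk : lam / 2 <= lam / K).
  { apply Rmult_le_compat_l; [lra|]. apply Rinv_le_contravar; lra. }
  assert (Hl4 : m * lam / 4 <= l).
  { eapply Rle_trans; [|exact Hlm]. assert (lam / 4 <= lam / K - 2) by lra. nra. }
  assert (Hl0 : 0 <= l) by nra.
  assert (H1 : l / (1 + q) <= (1 / K) * (lam * (l / (2 * A)))).
  { replace ((1 / K) * (lam * (l / (2 * A)))) with (lam * l / (2 * K * A)) by (field; lra).
    apply Rmult_le_reg_r with ((1 + q) * (2 * K * A)).
    { apply Rmult_lt_0_compat; nra. }
    replace (l / (1 + q) * ((1 + q) * (2 * K * A))) with (l * (2 * K * A)) by (field; lra).
    replace (lam * l / (2 * K * A) * ((1 + q) * (2 * K * A))) with (l * (lam * (1 + q))) by (field; nra).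
    apply Rmult_le_compat_l; lra. }
  assert (H2 : (1 / K) * lam <= lam).
  { assert (1 / K <= 1).
    { unfold Rdiv; rewrite Rmult_1_l, <- Rinv_1. apply Rinv_le_contravar; lra. }
    nra. }
  assert (H3 : l / (1 + q) - (1 / q) * (l / 2) = l * (q - 1) / (2 * q * (q + 1))) by (field; lra).
  assert (H4 : 6 * lam <= l * (q - 1) / (2 * q * (q + 1))).
  { apply Rmult_le_reg_r with (2 * q * (q + 1)); [nra|].
    replace (l * (q - 1) / (2 * q * (q + 1)) * (2 * q * (q + 1))) with (l * (q - 1)) by (field; lra).
    assert (m * lam / 4 * (q - 1) <= l * (q - 1)) by (apply Rmult_le_compat_r; lra).
    assert (48 * q * (q + 1) * lam <= m * (q - 1) * lam) by (apply Rmult_le_compat_r; lra).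
    nra. }
  assert (H5 : (1 / K) * (lam * (l / (2 * A) - 1)) = (1 / K) * (lam * (l / (2 * A))) - (1 / K) * lam) by ring.
  rewrite H5. subst A. nra.
Qed.

Lemma dir1 (G : graph) (Hc : connected_graph G) :
  strongly_shortcut_graph G -> ~ approximates_ngons G.
Proof.
  intros [q [Hq [N HN]]] Happ.
  set (K := 1 + Rmin 1 ((q - 1) / 8)).
  assert (HK : 1 < K /\ K <= 2 /\ 8 * (K - 1) <= q - 1).
  { unfold K. assert (0 < (q - 1) / 8) by lra.
    pose proof (Rmin_l 1 ((q - 1) / 8)). pose proof (Rmin_r 1 ((q - 1) / 8)).
    assert (0 < Rmin 1 ((q - 1) / 8)) by (apply Rmin_glb_lt; lra). lra. }
  destruct HK as [HK1 [HK2 HKq]].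
  destruct (nat_above (48 * q * (q + 1) / (q - 1) + 2)) as [m Hm].
  assert (Hm48 : 48 * q * (q + 1) <= INR m * (q - 1)).
  { assert (48 * q * (q + 1) / (q - 1) <= INR m) by lra.
    apply Rmult_le_compat_r with (r := q - 1) in H; [|lra].
    replace (48 * q * (q + 1) / (q - 1) * (q - 1)) with (48 * q * (q + 1)) in H by (field; lra).
    exact H. }
  assert (Hm2 : (2 <= m)%nat).
  { assert (0 <= 48 * q * (q + 1) / (q - 1)) by (apply Rle_mult_inv_pos; nra).
    destruct (le_lt_dec 2 m) as [|Hl]; auto.
    assert (INR m <= INR 1) by (apply le_INR; lia). simpl in H0. lra. }
  assert (HmR : 2 <= INR m) by (change 2 with (INR 2); apply le_INR; exact Hm2).
  destruct (Happ K HK1 m (8 + 32 / (q - 1) + 4 * INR N)) as [lam [Hlam [HL [g [Hval Hbil]]]]].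
  assert (HN0 : 0 <= INR N) by apply pos_INR.
  assert (H32 : 0 <= 32 / (q - 1)) by (apply Rle_mult_inv_pos; lra).
  assert (Hl8 : 8 <= lam) by lra.
  assert (Hlq : 32 <= lam * (q - 1)).
  { assert (32 / (q - 1) <= lam) by lra.
    apply Rmult_le_compat_r with (r := q - 1) in H; [|lra].
    replace (32 / (q - 1) * (q - 1)) with 32 in H by (field; lra). exact H. }
  set (v := fun i => nearv (g (Nat.modulo i m))).
  assert (Hv : forall i, gdist (g (Nat.modulo i m)) (Vtx (v i)) <= 1).
  { intros i. apply nearv_close; auto. apply Hval. apply Nat.mod_upper_bound. lia. }
  assert (Hvm : v m = v 0%nat).
  { unfold v. rewrite Nat.Div0.mod_same, Nat.Div0.mod_0_l. reflexivity. }
  set (A := K * lam + 2).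
  set (P := fun i => INR (length (bigp G v 0 i))).
  assert (HP0 : P 0%nat = 0) by reflexivity.
  assert (Hstep : forall i, (i < m)%nat -> lam / K - 2 <= P (S i) - P i <= A).
  { intros i Hi. unfold P. rewrite bigp_len_S by exact Hc. rewrite plus_INR.
    rewrite <- vdist_vn.
    assert (Hcyc : cyc_dist m i (Nat.modulo (S i) m) = 1).
    { unfold cyc_dist. rewrite max_min_INR.
      destruct (Nat.eq_dec (S i) m) as [E|E].
      - rewrite E, Nat.Div0.mod_same. change (INR 0) with 0.
        replace (INR i) with (INR m - 1) by (rewrite <- E, S_INR; ring).
        rewrite Rminus_0_r, Rabs_right by lra.
        rewrite Rmin_right by lra. ring.
      - rewrite Nat.mod_small by lia. rewrite S_INR.
        rewrite Rabs_minus_sym. replace (INR i + 1 - INR i) with 1 by ring.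
        rewrite Rabs_R1. apply Rmin_left. lra. }
    assert (Hi' : (Nat.modulo (S i) m < m)%nat) by (apply Nat.mod_upper_bound; lia).
    destruct (Hbil i (Nat.modulo (S i) m) Hi Hi') as [Hb1 Hb2].
    rewrite Hcyc in Hb1, Hb2.
    pose proof (Hv i) as Hv1. rewrite Nat.mod_small in Hv1 by exact Hi.
    pose proof (Hv (S i)) as Hv2.
    change (vdist G (v i) (v (S i))) with (gdist (G:=G) (Vtx (v i)) (Vtx (v (S i)))).
    assert (Va := Hval i Hi). assert (Vb := Hval _ Hi').
    split.
    - pose proof (gdist_tri G Hc (g i) (Vtx (v i)) (g (Nat.modulo (S i) m)) I).
      pose proof (gdist_tri G Hc (Vtx (v i)) (Vtx (v (S i))) (g (Nat.modulo (S i) m)) I).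
      rewrite (gdist_sym G Hc (Vtx (v (S i)))) in H0.
      assert (1 / K * (lam * 1) = lam / K) by (field; lra). lra.
    - pose proof (gdist_tri G Hc (Vtx (v i)) (g i) (Vtx (v (S i))) Va).
      pose proof (gdist_tri G Hc (g i) (g (Nat.modulo (S i) m)) (Vtx (v (S i))) Vb).
      rewrite (gdist_sym G Hc (Vtx (v i)) (g i)) in H. unfold A. lra. }
  assert (HlamK : lam / 2 <= lam / K).
  { apply Rmult_le_compat_l; [lra|]. apply Rinv_le_contravar; lra. }
  pose proof (steps_bounds P A (lam / K - 2) m Hstep) as Hsb.
  set (l := length (bigp G v 0 m)).
  assert (HPm : P m = INR l) by reflexivity.
  assert (Hlbig : INR m * (lam / K - 2) <= INR l).
  { rewrite <- HPm. destruct (Hsb 0%nat m ltac:(lia) ltac:(lia)) as [H1 _].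
    rewrite Nat.sub_0_r, HP0 in H1. lra. }
  assert (HlN : INR N < INR l).
  { assert (lam / K - 2 >= 2) by lra. nra. }
  apply INR_lt in HlN.
  assert (Hl0 : (0 < l)%nat) by lia.
  destruct (build G Hc v m Hvm Hl0) as [f [h [Hcy HFv]]].
  fold l in Hcy, HFv.
  apply (proj1 (Nat.lt_nge N l) HlN). apply (HN l f h Hcy).
  set (Lr := INR l).
  assert (HLr : 0 < Lr) by (apply lt_0_INR; exact Hl0).
  assert (HAp : 0 < A) by (unfold A; nra).
  assert (Hmono : forall a b, (a <= b)%nat -> (b <= m)%nat -> P a <= P b).
  { intros a b Hab Hbm. destruct (Hsb a b Hab Hbm) as [H1 _].
    pose proof (pos_INR (b - a)). assert (0 <= lam / K - 2) by lra. nra. }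
  assert (Hclose : forall y i, (i < m)%nat -> P i <= y <= P (S i) ->
            gdist (cycle_pt G l h y) (g i) <= A + 1).
  { intros y i Hi Hy.
    assert (Hz : P i = IZR (Z.of_nat (length (bigp G v 0 i)))) by (unfold P; apply INR_IZR_INZ).
    pose proof (cp_int G Hc l f h Hcy (Z.of_nat (length (bigp G v 0 i)))) as H1.
    rewrite HFv in H1 by lia. rewrite <- Hz in H1.
    pose proof (cp_lip G Hc l f h Hcy (P i) y (proj1 Hy)) as H2.
    rewrite gdist_sym in H2 by exact Hc.
    pose proof (Hv i) as H3. rewrite Nat.mod_small in H3 by exact Hi.
    rewrite gdist_sym in H3 by exact Hc.
    pose proof (gdist_tri G Hc (cycle_pt G l h y) (cycle_pt G l h (P i)) (g i) (cp_valid G l h _)).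
    pose proof (gdist_tri G Hc (cycle_pt G l h (P i)) (Vtx (v i)) (g i) I).
    pose proof (Hstep i Hi). lra. }
  assert (Hmain : forall a, 0 <= a -> a + Lr / 2 < Lr ->
            (1 / q) * (Lr / 2) <= gdist (cycle_pt G l h a) (cycle_pt G l h (a + Lr / 2))).
  { intros a Ha0 Hab.
    assert (Ham : a < P m) by (rewrite HPm; fold Lr; lra).
    assert (Hbm : a + Lr / 2 < P m) by (rewrite HPm; fold Lr; lra).
    assert (Hb0 : 0 <= a + Lr / 2) by lra.
    set (b := a + Lr / 2) in *.
    destruct (seg_locate P m a HP0 Ha0 Ham) as [i [Hi [Hia Hia']]].
    destruct (seg_locate P m b HP0 Hb0 Hbm) as [j [Hj [Hjb Hjb']]].
    assert (Hij : (i <= j)%nat).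
    { destruct (le_lt_dec i j) as [|Hlt]; auto.
      pose proof (Hmono (S j) i ltac:(lia) ltac:(lia)). unfold b in *. lra. }
    destruct (Hsb i (S j) ltac:(lia) ltac:(lia)) as [_ Hu1].
    destruct (Hsb 0%nat (S i) ltac:(lia) ltac:(lia)) as [_ Hu2].
    destruct (Hsb j m ltac:(lia) ltac:(lia)) as [_ Hu3].
    rewrite HP0, Nat.sub_0_r in Hu2. rewrite HPm in Hu3. fold Lr in Hu3.
    rewrite minus_INR in Hu1, Hu3 by lia. rewrite S_INR in Hu1, Hu2.
    set (c0 := Lr / (2 * A) - 1).
    assert (Hc0def : Lr / 2 = (c0 + 1) * A) by (unfold c0; field; lra).
    assert (Hcyc : c0 <= cyc_dist m i j).
    { unfold cyc_dist. rewrite max_min_INR. rewrite Rabs_minus_sym, Rabs_right.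
      2: { apply le_INR in Hij. lra. }
      apply Rmin_glb.
      - assert ((c0 + 1) * A <= (INR j - INR i + 1) * A) by (unfold b in *; nra).
        apply Rmult_le_reg_r in H; lra.
      - assert ((c0 + 1) * A <= (INR m - (INR j - INR i) + 1) * A) by (unfold b in *; nra).
        apply Rmult_le_reg_r in H; lra. }
    destruct (Hbil i j Hi Hj) as [Hb1 _].
    assert (Hb1' : 1 / K * (lam * c0) <= gdist (g i) (g j)).
    { eapply Rle_trans; [|exact Hb1]. apply Rmult_le_compat_l.
      - apply Rlt_le, Rdiv_lt_0_compat; lra.
      - apply Rmult_le_compat_l; lra. }
    pose proof (Hclose a i Hi ltac:(lra)) as C1.
    pose proof (Hclose b j Hj ltac:(lra)) as C2.
    rewrite gdist_sym in C1 by exact Hc.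
    pose proof (gdist_tri G Hc (g i) (cycle_pt G l h a) (g j) (cp_valid G l h _)).
    pose proof (gdist_tri G Hc (cycle_pt G l h a) (cycle_pt G l h b) (g j) (cp_valid G l h _)).
    pose proof (final_ineq q K lam A Lr (INR m) Hq HK1 HK2 HKq Hlq Hl8 eq_refl
                  ltac:(fold Lr in Hlbig; lra) Hm48 (pos_INR m)) as Hf.
    fold c0 in Hf. unfold A in *. lra. }
  intros x. apply Rle_ge.
  set (z := Int_part (x / Lr)).
  pose proof (base_Int_part (x / Lr)) as Bz. fold z in Bz.
  set (x0 := x - IZR z * Lr).
  assert (Hx0 : 0 <= x0 < Lr).
  { unfold x0. destruct Bz as [B1 B2].
    apply Rmult_le_compat_r with (r := Lr) in B1; [|lra].
    assert (x / Lr < IZR z + 1) by lra.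
    apply Rmult_lt_compat_r with (r := Lr) in H; [|lra].
    replace (x / Lr * Lr) with x in B1, H by (field; lra). lra. }
  assert (E1 : cycle_pt G l h x = cycle_pt G l h x0).
  { rewrite <- (cp_period G l h x0 z Hl0). f_equal. unfold x0; fold Lr; ring. }
  assert (E2 : cycle_pt G l h (x + INR l / 2) = cycle_pt G l h (x0 + Lr / 2)).
  { rewrite <- (cp_period G l h (x0 + Lr / 2) z Hl0). f_equal. unfold x0, Lr; ring. }
  rewrite E1, E2. fold Lr.
  destruct (Rlt_dec (x0 + Lr / 2) Lr) as [Hlt|Hge].
  - apply Hmain; lra.
  - set (a := x0 - Lr / 2).
    assert (E3 : cycle_pt G l h (x0 + Lr / 2) = cycle_pt G l h a).
    { rewrite <- (cp_period G l h a 1 Hl0). f_equal. unfold a, Lr. lra. }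
    rewrite E3, gdist_sym by exact Hc.
    replace x0 with (a + Lr / 2) by (unfold a; ring).
    apply Hmain; unfold a; lra.
Qed.

Theorem corollary3p6 (G : graph) (Hconn : connected_graph G) :
  strongly_shortcut_graph G <-> ~ approximates_ngons G.
Proof.
  split.
  - apply dir1; exact Hconn.
  - intros H. apply NNPP. intros HnSS. apply H. apply dir2; assumption.
Qed.
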